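(* Let $r$ be a positive integer and $n\ge0$. Then $$E_n^{(r)}(x)=\frac{2^{r-1}}{(r-1)!}\sum_{\substack{0\le j\le r-1\\ 0\le k\le n/2}}(-1)^j\,s(r,r-j)\binom{n}{2k}r^{n-2k}\,E_{2k+r-j-1}\,E_{n-2k}\!\left(\frac{x}{r}\right).$$
   Context: For a positive integer $r$, the Euler polynomials of order $r$ are defined by $\sum_{n\ge0}E_n^{(r)}(x)\frac{t^n}{n!}=\left(\frac{2}{e^t+1}\right)^re^{xt}$. $E_n(x)=E_n^{(1)}(x)$ are the Euler polynomials and $E_m:=E_m(0)$. $s(n,l)$ denotes the (signed) Stirling numbers of the first kind, $x(x-1)\cdots(x-n+1)=\sum_l s(n,l)x^l$. *)

(* Defs.v *)
From mathcomp Require Import all_boot all_order all_algebra.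
Set Implicit Arguments. Unset Strict Implicit. Unset Printing Implicit Defensive.
Import Order.TTheory GRing.Theory Num.Theory.
Local Open Scope ring_scope.

(* Exponential generating functions are represented by their coefficient
   sequences a : nat -> R, with A(t) = \sum_n a n t^n / n!.
   The product of EGFs is the binomial convolution. *)
Definition egf_mul {R : numFieldType} (a b : nat -> R) : nat -> R :=
  fun n => \sum_(k < n.+1) 'C(n, k)%:R * a k * b (n - k)%N.

Definition egf_one {R : numFieldType} : nat -> R := fun n => (n == 0%N)%:R.

Fixpoint egf_pow {R : numFieldType} (a : nat -> R) (r : nat) : nat -> R :=
  match r with
  | 0%N => egf_one
  | r'.+1 => egf_mul a (egf_pow a r')
  end.

Definition egf_exp {R : numFieldType} (x : R) : nat -> R := fun n => x ^+ n.

(* Coefficients g_0, ..., g_n of the EGF 2/(e^t+1), i.e. of the formal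
   inverse of (e^t+1)/2: they are uniquely determined by
   (e^t + 1) * G(t) = 2, i.e. g_n + \sum_(k<=n) C(n,k) g_k = 2 [n = 0]. *)
Fixpoint euler_seq {R : numFieldType} (n : nat) : seq R :=
  match n with
  | 0%N => [:: 1]
  | n'.+1 => let s := euler_seq n' in
             rcons s (- (\sum_(k < n'.+1) 'C(n'.+1, k)%:R * s`_k) / 2)
  end.

(* E_m := E_m(0), the m-th coefficient of 2/(e^t+1) *)
Definition eulerE {R : numFieldType} (m : nat) : R := (euler_seq m)`_m.

(* Euler polynomials of order r:
   \sum_n E_n^{(r)}(x) t^n/n! = (2/(e^t+1))^r e^{xt} *)
Definition eulerPolyR {R : numFieldType} (r n : nat) (x : R) : R :=
  egf_mul (egf_pow eulerE r) (egf_exp x) n.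

Definition eulerPoly {R : numFieldType} (n : nat) (x : R) : R := eulerPolyR 1 n x.

Definition stirling1 (n l : nat) : int :=
  (\prod_(i < n) ('X - (i%:R)%:P) : {poly int})`_l.

(* Main.v *)
Require Import Defs.
From HB Require Import structures.
From mathcomp Require Import all_boot all_order all_algebra.
From mathcomp Require Import boolp.
From mathcomp Require Import ring zify.
Set Implicit Arguments. Unset Strict Implicit. Unset Printing Implicit Defensive.
Import Order.TTheory GRing.Theory Num.Theory.
Local Open Scope ring_scope.

Section EGF.
Variable R : numFieldType.
Implicit Types a b c : nat -> R.

Definition hat a : nat -> R := fun i => a i / i`!%:R.
Definition P (N : nat) a : {poly R} := \poly_(i < N) hat a i.

Lemma fact_neq0 n : (n`!%:R : R) != 0.
Proof. by rewrite pnatr_eq0 -lt0n fact_gt0. Qed.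

Lemma hatK a n : a n = hat a n * n`!%:R.
Proof. by rewrite /hat divfK // fact_neq0. Qed.

Lemma hat_inj a b : (forall n, hat a n = hat b n) -> a = b.
Proof. by move=> H; apply: funext => n; rewrite hatK H -hatK. Qed.

Lemma coefP N a i : (i < N)%N -> (P N a)`_i = hat a i.
Proof. by move=> iN; rewrite coef_poly iN. Qed.

Lemma hatM N a b n : (n < N)%N -> hat (egf_mul a b) n = (P N a * P N b)`_n.
Proof.
move=> nN; rewrite coefM /hat /egf_mul mulr_suml; apply: eq_bigr => i _.
rewrite !coefP; last 2 first.
- by apply: leq_ltn_trans nN; apply: leq_subr.
- by apply: leq_ltn_trans nN; rewrite -ltnS.
have iln : (i <= n)%N by rewrite -ltnS.
rewrite /hat -(bin_fact iln) !natrM.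
have hC : ('C(n, i)%:R : R) != 0 by rewrite pnatr_eq0 -lt0n bin_gt0.
have := fact_neq0 i; have := fact_neq0 (n - i).
move: ('C(n, i)%:R) (i`!%:R) ((n-i)`!%:R) (a i) (b (n - i)) hC => C x y u v hC hy hx.
field. by rewrite hC hx hy.
Qed.


Lemma coefM_eq (p q p' q' : {poly R}) n :
  (forall i, (i <= n)%N -> p`_i = p'`_i) -> (forall i, (i <= n)%N -> q`_i = q'`_i) ->
  (p * q)`_n = (p' * q')`_n.
Proof.
move=> hp hq; rewrite !coefM; apply: eq_bigr => i _.
by rewrite hp ?hq // ?leq_subr // -ltnS.
Qed.

Lemma egf_mulA : associative (@egf_mul R).
Proof.
move=> a b c; apply: hat_inj => n.
rewrite (hatM _ _ (ltnSn n)) (hatM _ _ (ltnSn n)).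
transitivity ((P n.+1 a * (P n.+1 b * P n.+1 c))`_n).
  apply: coefM_eq => // i ilen.
  by rewrite coefP ?ltnS // (@hatM n.+1 _ _ i ilen).
rewrite mulrA; apply: coefM_eq => // i ilen.
by rewrite coefP ?ltnS // (@hatM n.+1 _ _ i ilen).
Qed.

Lemma egf_mulC : commutative (@egf_mul R).
Proof.
move=> a b; apply: hat_inj => n.
by rewrite (hatM _ _ (ltnSn n)) (hatM _ _ (ltnSn n)) mulrC.
Qed.

Lemma egf_mul1 : left_id egf_one (@egf_mul R).
Proof.
move=> a; apply: hat_inj => n.
rewrite (hatM _ _ (ltnSn n)).
have -> : P n.+1 egf_one = 1.
  apply/polyP => i; rewrite coef_poly coef1 /hat /egf_one.
  case: i => [|i]; first by rewrite fact0 divr1.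
  by case: ifP => //; rewrite mul0r.
by rewrite mul1r coefP.
Qed.

Lemma egf_mulDl (a b c : nat -> R) :
  egf_mul (fun n => a n + b n) c = (fun n => egf_mul a c n + egf_mul b c n).
Proof.
apply: funext => n; rewrite /egf_mul -big_split; apply: eq_bigr => i _.
by rewrite mulrDr mulrDl.
Qed.
End EGF.

Definition egf (R : numFieldType) := nat -> R.
HB.instance Definition _ (R : numFieldType) := Choice.copy (egf R) (nat -> R).

Section Inst.
Variable R : numFieldType.
Definition ezero : egf R := fun _ => 0.
Definition eadd (a b : egf R) : egf R := fun n => a n + b n.
Definition eopp (a : egf R) : egf R := fun n => - a n.
Lemma eaddA : associative eadd.
Proof. by move=> a b c; apply: funext => n; rewrite /eadd addrA. Qed.
Lemma eaddC : commutative eadd.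
Proof. by move=> a b; apply: funext => n; rewrite /eadd addrC. Qed.
Lemma eadd0 : left_id ezero eadd.
Proof. by move=> a; apply: funext => n; rewrite /eadd add0r. Qed.
Lemma eaddN : left_inverse ezero eopp eadd.
Proof. by move=> a; apply: funext => n; rewrite /eadd /eopp addNr. Qed.
End Inst.

HB.instance Definition _ (R : numFieldType) :=
  GRing.isZmodule.Build (egf R) (@eaddA R) (@eaddC R) (@eadd0 R) (@eaddN R).

Lemma egf_one_neq0 (R : numFieldType) : (egf_one : egf R) != 0.
Proof.
apply/eqP => H; have := congr1 (fun f : egf R => f 0%N) H.
by rewrite /egf_one /= => /eqP; rewrite oner_eq0.
Qed.

HB.instance Definition _ (R : numFieldType) :=
  GRing.Zmodule_isComNzRing.Build (egf R) (@egf_mulA R) (@egf_mulC R)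
    (@egf_mul1 R) (@egf_mulDl R) (@egf_one_neq0 R).

Section Ring.
Variable R : numFieldType.
Local Notation S := (egf R).
Implicit Types a b c : S.

Lemma addSE a b n : (a + b) n = a n + b n. Proof. by []. Qed.
Lemma oppSE a n : (- a) n = - a n. Proof. by []. Qed.
Lemma subSE a b n : (a - b) n = a n - b n. Proof. by []. Qed.
Lemma mulSE a b : a * b = egf_mul a b. Proof. by []. Qed.
Lemma oneSE n : (1 : S) n = egf_one n. Proof. by []. Qed.
Lemma natSE k n : (k%:R : S) n = k%:R * egf_one n.
Proof.
elim: k => [|k IH]; first by rewrite mul0r.
rewrite -addn1 natrD addSE IH natrD mulrDl mul1r. by congr (_ + _).
Qed.
Lemma natSmul k a n : (k%:R * a) n = k%:R * a n.
Proof.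
rewrite mulSE /egf_mul big_ord_recl /= big1 ?addr0.
  by rewrite bin0 mul1r natSE /egf_one eqxx mulr1 subn0.
by move=> i _; rewrite natSE /egf_one /= mulr0 mulr0 mul0r.
Qed.
Lemma egf_powE (a : S) r : egf_pow a r = a ^+ r.
Proof. by elim: r => [|r IH] //=; rewrite exprS IH. Qed.
End Ring.

Section Ops.
Variable R : numFieldType.
Local Notation S := (egf R).
Implicit Types a b c : S.

Definition D a : S := fun n => a n.+1.

Lemma hatD N a i : (i.+1 < N)%N -> hat (D a) i = ((P N a)^`())`_i.
Proof.
move=> iN; rewrite coef_deriv coefP // -mulr_natr /hat /D factS natrM.
have := fact_neq0 R i; have : (i.+1%:R : R) != 0 by rewrite pnatr_eq0.
move: (i.+1%:R) (i`!%:R) => u v hu hv; field. by rewrite hu hv.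
Qed.

Lemma hatB a b n : hat (a + b) n = hat a n + hat b n.
Proof. by rewrite /hat addSE mulrDl. Qed.

Lemma DM a b : D (a * b) = D a * b + a * D b.
Proof.
apply: hat_inj => n; rewrite (@hatD n.+2) // hatB !mulSE.
rewrite (hatM _ _ (ltnW (ltnSn n.+1))) (hatM _ _ (ltnW (ltnSn n.+1))).
rewrite !coef_deriv coefP // (hatM _ _ (ltnSn n.+1)) -coef_deriv derivM coefD.
congr (_ + _); apply: coefM_eq => // i ilen;
  by rewrite coefP ?ltnS ?(leqW ilen) // (@hatD n.+2).
Qed.
End Ops.

Section Ops2.
Variable R : numFieldType.
Local Notation S := (egf R).
Implicit Types a b c : S.

Lemma DD a b : D (a + b) = D a + D b. Proof. by []. Qed.
Lemma DN a : D (- a) = - D a. Proof. by []. Qed.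
Lemma Dnat k : D (k%:R : S) = 0.
Proof. by apply: funext => n; rewrite /D natSE /egf_one /= mulr0. Qed.
Lemma Dexp1 : D (egf_exp 1 : S) = egf_exp 1.
Proof. by apply: funext => n; rewrite /D /egf_exp !expr1n. Qed.

Definition sig (x : R) a : S := fun n => x ^+ n * a n.
Lemma sigM x a b : sig x (a * b) = sig x a * sig x b.
Proof.
apply: funext => n; rewrite /sig !mulSE /egf_mul mulr_sumr; apply: eq_bigr => i _.
have hi : (i <= n)%N by rewrite -ltnS.
rewrite -{1}(subnKC hi) exprD.
move: (x ^+ i) (x ^+ (n - i)) ('C(n, i)%:R) (a i) (b (n - i)%N) => u v w p q.
ring.
Qed.
Lemma sigD x a b : sig x (a + b) = sig x a + sig x b.
Proof. by apply: funext => n; rewrite /sig !addSE mulrDr. Qed.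
Lemma sigN x a : sig x (- a) = - sig x a.
Proof. by apply: funext => n; rewrite /sig !oppSE mulrN. Qed.
Lemma signat x k : sig x (k%:R) = k%:R.
Proof.
apply: funext => n; rewrite /sig !natSE /egf_one.
by case: n => [|n] /=; rewrite ?expr0 ?mul1r ?mulr0.
Qed.
Lemma sigX x a m : sig x (a ^+ m) = (sig x a) ^+ m.
Proof.
elim: m => [|m IH]; first by rewrite !expr0; have := signat x 1; rewrite mulr1n.
by rewrite !exprS sigM IH.
Qed.
Lemma sigexp x y : sig x (egf_exp y) = egf_exp (x * y).
Proof. by apply: funext => n; rewrite /sig /egf_exp exprMn. Qed.

Lemma expM y z : (egf_exp y : S) * egf_exp z = egf_exp (y + z).
Proof.
apply: funext => n; rewrite mulSE /egf_mul /egf_exp addrC exprDn.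
by apply: eq_bigr => i _; rewrite mulr_natl mulrnAl mulrC.
Qed.
Lemma exp0 : (egf_exp 0 : S) = 1.
Proof. by apply: funext => n; rewrite /egf_exp expr0n oneSE /egf_one. Qed.
Lemma expX y m : (egf_exp y : S) ^+ m = egf_exp (y *+ m).
Proof.
elim: m => [|m IH]; first by rewrite expr0 mulr0n exp0.
by rewrite exprS IH expM mulrS.
Qed.
End Ops2.

Section Euler.
Variable R : numFieldType.
Local Notation S := (egf R).
Implicit Types a b c : S.

Lemma euler_seq_size m : size (euler_seq m : seq R) = m.+1.
Proof. by elim: m => [|m IH] //=; rewrite size_rcons IH. Qed.

Lemma euler_seq_nth m k : (k <= m)%N -> (euler_seq m : seq R)`_k = eulerE k.
Proof.
elim: m => [|m IH]; first by rewrite leqn0 => /eqP->.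
rewrite leq_eqVlt => /orP[/eqP-> //|]; rewrite ltnS => km.
by rewrite /= nth_rcons euler_seq_size ltnS km IH.
Qed.

Lemma eulerE0 : eulerE 0 = (1 : R). Proof. by []. Qed.

Lemma eulerES n : eulerE n.+1 = - (\sum_(k < n.+1) 'C(n.+1, k)%:R * eulerE k) / (2 : R).
Proof.
rewrite {1}/eulerE /= nth_rcons euler_seq_size ltnn eqxx; congr (- _ / _).
by apply: eq_bigr => k _; rewrite euler_seq_nth // -ltnS.
Qed.

Definition f : S := eulerE.
Definition e1 : S := egf_exp 1.

Lemma frel : f * (1 + e1) = 2.
Proof.
apply: funext => n; rewrite mulSE /egf_mul natSE.
rewrite (eq_bigr (fun k : 'I_n.+1 => 'C(n, k)%:R * f k * egf_one (n - k)%N + 'C(n, k)%:R * f k)); last first.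
  by move=> k _; rewrite addSE /e1 /egf_exp expr1n oneSE mulrDr mulr1.
rewrite big_split /=.
rewrite big_ord_recr /= subnn big1 ?add0r; last first.
  move=> k _; rewrite /egf_one subn_eq0 leqNgt ltn_ord /= mulr0 //.
rewrite /egf_one eqxx binn mul1r mulr1.
case: n => [|n]; first by rewrite big_ord1 /= bin0 mul1r /f eulerE0 mulr1.
rewrite big_ord_recr /= binn mul1r /= mulr0 /f eulerES.
set s := \sum_(_ < _) _.
have h2 : (2 : R) != 0 by rewrite pnatr_eq0.
by field.
Qed.
End Euler.

Section Ric.
Variable R : numFieldType.
Local Notation S := (egf R).
Local Notation f := (@f R).
Local Notation e1 := (@e1 R).
Implicit Types a b c : S.

Lemma D_natmul k a : D (k%:R * a) = k%:R * D a.
Proof. by rewrite DM Dnat mul0r add0r. Qed.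

Lemma fe1 : f * e1 = 2 - f.
Proof. by rewrite -(frel R); ring. Qed.

Lemma ric : 2 * D f = f * f - 2 * f.
Proof.
have h1 : D f * (1 + e1) + f * e1 = 0.
  have := congr1 (@D R) (frel R).
  have D1 : D (1 : S) = 0 by apply: funext => n; rewrite /D oneSE.
  by rewrite DM DD D1 /e1 Dexp1 add0r Dnat.
transitivity (f * (D f * (1 + e1))); first by rewrite -(frel R); ring.
have -> : D f * (1 + e1) = - (f * e1) by apply/eqP; rewrite -addr_eq0 h1.
by rewrite fe1; ring.
Qed.

Lemma Dpow m : 2 * D (f ^+ m) = m%:R * (f ^+ m.+1 - 2 * f ^+ m).
Proof.
elim: m => [|m IH]; first by rewrite expr0 -[1]/(1%:R) Dnat mulr0 mul0r.
rewrite exprS DM mulrDr mulrA ric.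
have -> : 2 * (f * D (f ^+ m)) = f * (2 * D (f ^+ m)) by ring.
rewrite IH !exprS -natr1; ring.
Qed.
End Ric.

Section Act.
Variable R : numFieldType.
Local Notation S := (egf R).
Local Notation f := (@f R).
Implicit Types a b c : S.

Definition act (p : {poly R}) a : S :=
  fun n => \sum_(i < size p) p`_i * a (n + i)%N.

Lemma act_widen (p : {poly R}) a N n : (size p <= N)%N ->
  act p a n = \sum_(i < N) p`_i * a (n + i)%N.
Proof.
move=> hN; rewrite /act (big_ord_widen _ (fun i => p`_i * a (n + i)%N) hN) big_mkcond.
apply: eq_bigr => i _; case: ifP => // /negbT; rewrite -leqNgt => hi.
by rewrite nth_default // mul0r.
Qed.

Lemma size_mulXc (p : {poly R}) (c : R) : (size (p * ('X + c%:P))%R <= (size p).+1)%N.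
Proof.
apply: (leq_trans (size_mul_leq _ _)); rewrite size_XaddC.
by rewrite addn2.
Qed.

Lemma act_mulXc (p : {poly R}) k a :
  act (p * ('X + (k%:R)%:P)) a = D (act p a) + k%:R * act p a.
Proof.
apply: funext => n; rewrite (act_widen _ _ (size_mulXc p k%:R)) addSE natSmul.
rewrite /D (@act_widen p a _ n.+1 (leqnn _)) (@act_widen p a _ n (leqnn _)).
rewrite mulr_sumr.
under eq_bigr => i _ do rewrite mulrDr coefD coefMX coefMC mulrDl.
rewrite big_split /= big_ord_recl /= mul0r add0r big_ord_recr /= [p`_(size p)]nth_default // !mul0r addr0.
congr (_ + _); apply: eq_bigr => i _.
  by rewrite add0n /bump /= add1n addnS addSn.
by rewrite [p`_i * _]mulrC mulrA.
Qed.

Definition Qp (m : nat) : {poly R} := \prod_(i < m) ('X + (i.+1%:R)%:P).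

Lemma size_Qp m : (size (Qp m) <= m.+1)%N.
Proof.
elim: m => [|m IH]; first by rewrite /Qp big_ord0 size_poly1.
rewrite /Qp big_ord_recr /=; exact: (leq_trans (size_mulXc _ _)).
Qed.

Lemma act_Qp m : 2 ^+ m * act (Qp m) f = m`!%:R * f ^+ m.+1.
Proof.
elim: m => [|m IH].
  rewrite expr0 mul1r fact0 mul1r expr1 /Qp big_ord0.
  apply: funext => n; rewrite /act size_poly1 big_ord1 coef1 /= mul1r addn0 //.
rewrite /Qp big_ord_recr /= -/(Qp m) act_mulXc.
set A := act (Qp m) f.
have hD := congr1 (@D R) IH.
rewrite -natrX !D_natmul natrX in hD.
transitivity (2 * (2 ^+ m * D A) + m.+1%:R * 2 * (2 ^+ m * A)).
  by rewrite exprS; ring.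
rewrite hD IH.
rewrite (_ : 2 * (m`!%:R * D (f ^+ m.+1)) = m`!%:R * (2 * D (f ^+ m.+1))); last by ring.
rewrite Dpow factS natrM !exprS -natr1; ring.
Qed.
End Act.

Section Even.
Variable R : numFieldType.
Local Notation S := (egf R).
Local Notation f := (@f R).
Local Notation e1 := (@e1 R).
Implicit Types a b c : S.

Definition Ev a : S := fun n => if odd n then 0 else a n.

Lemma two_neq0 : (2 : R) != 0. Proof. by rewrite pnatr_eq0. Qed.

Lemma Ev2 a : 2 * Ev a = a + sig (-1) a.
Proof.
apply: funext => n; rewrite natSmul addSE /sig /Ev -signr_odd.
case: (odd n) => /=; first by rewrite mulr0 mulN1r addrN.
by rewrite expr0 mul1r; ring.
Qed.

Lemma cancel2 a b : 2 * a = 2 * b -> a = b.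
Proof.
move=> h; apply: funext => n; have := congr1 (fun g : S => g n) h.
by rewrite !natSmul => /(mulfI two_neq0).
Qed.

Lemma sig1 x : sig x (1 : S) = 1.
Proof. by have := signat x 1; rewrite mulr1n. Qed.

Lemma negf : sig (-1) f = 2 - f.
Proof.
set g := sig (-1) f.
have h : g * (1 + (egf_exp (-1) : S)) = 2.
  by have := congr1 (sig (-1)) (frel R); rewrite sigM sigD sig1 /e1 sigexp mulr1 signat.
have hm : (egf_exp (-1) : S) * e1 = 1 by rewrite /e1 expM addNr exp0.
have hg : g * (1 + e1) = 2 * e1.
  by rewrite -h -mulrA mulrDl hm mul1r addrC.
apply/eqP; rewrite -subr_eq0; apply/eqP; apply: cancel2; rewrite mulr0.
transitivity ((g - (2 - f)) * (f * (1 + e1))); first by rewrite frel mulrC.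
transitivity (f * (g * (1 + e1)) - (2 - f) * (f * (1 + e1))); first by ring.
rewrite hg frel.
transitivity (2 * (f * e1) - (2 - f) * 2); first by ring.
by rewrite fe1; ring.
Qed.

Lemma main_ring r : f ^+ r = sig r%:R f * Ev (f ^+ r).
Proof.
apply: cancel2; rewrite mulrCA Ev2 sigX negf.
have hF : sig r%:R f * (1 + (egf_exp r%:R : S)) = 2.
  by have := congr1 (sig r%:R) (frel R); rewrite sigM sigD sig1 /e1 sigexp mulr1 signat.
have her : e1 ^+ r = (egf_exp r%:R : S) by rewrite /e1 expX.
rewrite -fe1 exprMn her.
transitivity (sig r%:R f * (1 + (egf_exp r%:R : S)) * f ^+ r); first by rewrite hF.
by ring.
Qed.
End Even.

Section Stir.
Variable R : numFieldType.

Definition Tp r : {poly R} := \prod_(i < r) ('X + (i%:R)%:P).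
Definition Sp r : {poly R} := \prod_(i < r) ('X - (i%:R)%:P).

Lemma stirE r l : (stirling1 r l)%:~R = (Sp r)`_l.
Proof.
rewrite /stirling1 -(coef_map (intr : {rmorphism int -> R})) map_prod_XsubC.
by under eq_bigr => i _ do rewrite (rmorph_nat (intr : {rmorphism int -> R})).
Qed.

Lemma TS r l : (Tp r)`_l = (-1) ^+ (r + l) * (Sp r)`_l.
Proof.
elim: r l => [|r IH] l.
  by rewrite /Tp /Sp !big_ord0 coef1; case: l => [|l] /=; rewrite ?expr0 ?mul1r ?mulr0.
rewrite /Tp /Sp !big_ord_recr /= -/(Tp r) -/(Sp r).
rewrite mulrDr mulrBr coefD coefB !coefMX !coefMC.
case: l => [|l] /=.
  by rewrite IH !addn0 exprS; ring.
by rewrite !IH !addnS !addSn !exprS; ring.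
Qed.

Lemma QpE m i : (Qp R m)`_i = (Tp m.+1)`_i.+1.
Proof.
rewrite /Tp big_ord_recl /= polyC0 addr0 coefXM /=.
by rewrite /Qp; congr (_`_i); apply: eq_bigr => j _; rewrite /bump /= add1n.
Qed.

Lemma QpStir r j : (j < r)%N ->
  (Qp R r.-1)`_(r.-1 - j) = (-1) ^+ j * (stirling1 r (r - j))%:~R.
Proof.
move=> jr; case: r jr => [//|r] jr /=.
rewrite QpE TS stirE subSn; last by rewrite -ltnS.
have jr' : (j <= r)%N by rewrite -ltnS.
have -> : (r.+1 + (r - j).+1 = j + 2 * (r - j).+1)%N.
  by lia.
by rewrite exprD exprM expr2 mulN1r opprK expr1n mulr1.
Qed.
End Stir.

Lemma sum_even (R : numFieldType) (F : nat -> R) n :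
  (forall i, odd i -> F i = 0) ->
  \sum_(i < n.+1) F i = \sum_(k < n./2.+1) F (2 * k)%N.
Proof.
move=> hF; elim: n => [|n IH]; first by rewrite !big_ord1.
rewrite big_ord_recr /= IH uphalf_half.
case on: (odd n) => /=.
  rewrite add1n [RHS]big_ord_recr /=; congr (_ + _); congr (F _).
  by rewrite mul2n doubleS odd_halfK //; case: (n) on.
by rewrite add0n hF ?addr0 //= on.
Qed.

Unset Implicit Arguments. Set Strict Implicit. Set Printing Implicit Defensive.

Theorem mainTheorem8 (R : numFieldType) (r n : nat) (x : R) :
  (0 < r)%N ->
  eulerPolyR r n x =
    (2 ^+ r.-1 / (r.-1)`!%:R) *
    \sum_(j < r) \sum_(k < n./2.+1)
      ((-1) ^+ j * (stirling1 r (r - j))%:~R * 'C(n, 2 * k)%:R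
        * r%:R ^+ (n - 2 * k) * eulerE (2 * k + r - j - 1)
        * eulerPoly (n - 2 * k) (x / r%:R)).
Proof.
move=> r0.
have rR : (r%:R : R) != 0 by rewrite pnatr_eq0 -lt0n.
set c := 2 ^+ r.-1 / (r.-1)`!%:R.
pose Fr : egf R := sig r%:R (f R).
pose B : egf R := Fr * egf_exp x.
have hB m : r%:R ^+ m * eulerPoly m (x / r%:R) = B m.
  have -> : B = sig r%:R ((f R) * egf_exp (x / r%:R)).
    by rewrite sigM sigexp [r%:R * _]mulrC divfK.
  have e : egf_mul (@eulerE R) egf_one = f R := mulr1 (f R : egf R).
  by rewrite /sig /eulerPoly /eulerPolyR /= e.
have hf m : (f R ^+ r) m = c * act (Qp R r.-1) (f R) m.
  have := congr1 (fun g : egf R => g m) (act_Qp R r.-1).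
  rewrite prednK // -natrX !natSmul natrX => h.
  rewrite /c mulrAC h; field; exact: fact_neq0.
have hact k : act (Qp R r.-1) (f R) (2 * k)%N =
    \sum_(j < r) (-1) ^+ j * (stirling1 r (r - j))%:~R * eulerE (2 * k + r - j - 1).
  have hs : (size (Qp R r.-1) <= r)%N by rewrite -{2}(prednK r0) size_Qp.
  rewrite (act_widen _ _ hs).
  rewrite (reindex_inj rev_ord_inj); apply: eq_bigr => j _ /=.
  have jr := ltn_ord j.
  rewrite -(QpStir R jr); congr (_ * eulerE _).
    by congr (_`_ _); lia.
  by lia.
transitivity (\sum_(i < n.+1) 'C(n, i)%:R * Ev (f R ^+ r) i * B (n - i)%N).
  rewrite /eulerPolyR egf_powE.
  rewrite -[egf_mul _ _ n]/((f R ^+ r * (egf_exp x : egf R)) n).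
  rewrite {1}(main_ring R r).
  have -> : Fr * Ev (f R ^+ r) * egf_exp x = Ev (f R ^+ r) * B by rewrite /B; ring.
  by rewrite mulSE /egf_mul; apply: eq_bigr => i _.
rewrite (@sum_even R (fun i => 'C(n, i)%:R * Ev (f R ^+ r) i * B (n - i)%N) n); last first.
  by move=> i oi; rewrite /Ev oi mulr0 mul0r.
rewrite /c exchange_big /= mulr_sumr; apply: eq_bigr => k _ /=.
rewrite /Ev mul2n odd_double -mul2n hf hact -hB /c.
move: (eulerPoly (n - 2 * k) (x / r%:R)) => EP; rewrite !mulr_sumr mulr_suml.
by apply: eq_bigr => j _; ring.
Qed.
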